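(* Let $a_*\in\mathbb{R}\setminus\{0\}$ and $f_*\in C^2([-1,1]\times(\mathbb{R}\setminus\{-a_*\}))$ be such that \[ \partial_yf_*(1,a)=\frac{1-i(a_*+a)}{2i(a_*+a)}f_*(1,a)\quad\text{for all }a\in\mathbb{R}\setminus\{-a_*\}. \] Then $\mathcal R(a_*+a,f_*(\cdot,a))\in Y$ for all $a\in\mathbb{R}\setminus\{-a_*\}$, and the map $a\mapsto \mathcal R(a_*+a,f_*(\cdot,a))$ from $\mathbb{R}\setminus\{-a_*\}$ to $Y$ is continuous.
   Context: $Y$ is the vector space of all $f\in C(-1,1)$ (complex valued) such that $y\mapsto(1+y)(1-y)^2f(y)$ extends to a continuous function on $[-1,1]$, with norm $\|f\|_Y:=\sup_{y\in(-1,1)}(1+y)(1-y)^2|f(y)|$. For $\alpha\in\mathbb{R}\setminus\{0\}$, $f\in C^2(-1,1)$ and $y\in(-1,1)$, \[ \mathcal R(\alpha,f)(y):=f''(y)+p_0(y,\alpha)f'(y)+q_0(y,\alpha)f(y)+\frac{f(y)|f(y)|^2}{(1-y)^2}, \] where \[ p_0(y,\alpha):=\frac{4i\alpha}{(1-y)^3}-\frac{2i\alpha}{(1-y)^2}-\frac{2+\frac{2i}{\alpha}}{1-y}+\frac{2}{1+y},\qquad q_0(y,\alpha):=-\frac{2-2i\alpha}{(1-y)^3}-\frac{\frac{1}{\alpha^2}-\frac{i}{\alpha}}{(1-y)^2}-\frac{1+\frac{i}{\alpha}}{1-y}-\frac{1+\frac{i}{\alpha}}{1+y}. \] Here $f_*(\cdot,a)$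 denotes $y\mapsto f_*(y,a)$. *)

(* Defs.v *)
From Stdlib Require Import Reals.
From Coquelicot Require Import Coquelicot.
Open Scope R_scope.

Definition Cderive (g : R -> C) (y : R) : C :=
  (Derive (fun t => Re (g t)) y, Derive (fun t => Im (g t)) y).

Definition p0 (y alpha : R) : C :=
  (RtoC 4 * Ci * RtoC alpha / RtoC ((1 - y) ^ 3)
   - RtoC 2 * Ci * RtoC alpha / RtoC ((1 - y) ^ 2)
   - (RtoC 2 + RtoC 2 * Ci / RtoC alpha) / RtoC (1 - y)
   + RtoC 2 / RtoC (1 + y))%C.

Definition q0 (y alpha : R) : C :=
  (- (RtoC 2 - RtoC 2 * Ci * RtoC alpha) / RtoC ((1 - y) ^ 3)
   - (RtoC 1 / RtoC (alpha ^ 2) - Ci / RtoC alpha) / RtoC ((1 - y) ^ 2)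
   - (RtoC 1 + Ci / RtoC alpha) / RtoC (1 - y)
   - (RtoC 1 + Ci / RtoC alpha) / RtoC (1 + y))%C.

Definition Rop (alpha : R) (f : R -> C) (y : R) : C :=
  (Cderive (Cderive f) y + p0 y alpha * Cderive f y + q0 y alpha * f y
   + f y * RtoC (Cmod (f y) ^ 2) / RtoC ((1 - y) ^ 2))%C.

Definition wY (y : R) : R := (1 + y) * (1 - y) ^ 2.

Definition cont_on_closed (h : R -> C) : Prop :=
  forall y, -1 <= y <= 1 -> forall eps, 0 < eps -> exists delta, 0 < delta /\
    forall z, -1 <= z <= 1 -> Rabs (z - y) < delta -> Cmod (h z - h y)%C < eps.

Definition inY (f : R -> C) : Prop :=
  (forall y, -1 < y < 1 -> continuous f y) /\
  exists h : R -> C, cont_on_closed h /\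
    forall y, -1 < y < 1 -> h y = (RtoC (wY y) * f y)%C.

Definition Ydist_le (f g : R -> C) (e : R) : Prop :=
  forall y, -1 < y < 1 -> wY y * Cmod (f y - g y)%C <= e.

Definition cont_on_dom (astar : R) (F : R -> R -> C) : Prop :=
  forall y a, -1 <= y <= 1 -> a <> - astar ->
  forall eps, 0 < eps -> exists delta, 0 < delta /\
    forall y' a', -1 <= y' <= 1 -> a' <> - astar ->
      Rabs (y' - y) < delta -> Rabs (a' - a) < delta ->
      Cmod (F y' a' - F y a)%C < eps.

(* f is C^2 on [-1,1] x (R \ {-astar}) with the given partial derivatives:
   on the interior (-1,1) x (R \ {-astar}) the partial derivatives up to
   order 2 exist and equal fy, fa, fyy, fya (= d_a d_y f), fay (= d_y d_a f),
   faa, and all of these functions are continuous on the closed set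
   [-1,1] x (R \ {-astar}) (so their boundary values are the continuous
   extensions of the interior partial derivatives). *)
Definition C2_dom (astar : R) (f fy fa fyy fya fay faa : R -> R -> C) : Prop :=
  (forall y a, -1 < y < 1 -> a <> - astar ->
     is_derive (fun t => f t a) y (fy y a) /\
     is_derive (fun s => f y s) a (fa y a) /\
     is_derive (fun t => fy t a) y (fyy y a) /\
     is_derive (fun s => fy y s) a (fya y a) /\
     is_derive (fun t => fa t a) y (fay y a) /\
     is_derive (fun s => fa y s) a (faa y a)) /\
  cont_on_dom astar f /\ cont_on_dom astar fy /\ cont_on_dom astar fa /\
  cont_on_dom astar fyy /\ cont_on_dom astar fya /\ cont_on_dom astar fay /\
  cont_on_dom astar faa.

(* Main.v *)
Require Import Defs.
From Stdlib Require Import Reals Lra ClassicalEpsilon Classical.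
From Coquelicot Require Import Coquelicot.
Open Scope R_scope.

Lemma is_derive_Re (g : R -> C) x l : is_derive g x l -> is_derive (fun t => Re (g t)) x (Re l).
Proof.
  intros H. unfold is_derive in *.
  eapply filterdiff_ext_lin.
  - apply (filterdiff_comp g (fun t : prod_NormedModule R_AbsRing R_NormedModule R_NormedModule => fst t) _ (fun t => fst t) H).
    apply filterdiff_linear. apply is_linear_fst.
  - intros y. simpl. destruct l. simpl. reflexivity.
Qed.
Lemma is_derive_Im (g : R -> C) x l : is_derive g x l -> is_derive (fun t => Im (g t)) x (Im l).
Proof.
  intros H. unfold is_derive in *.
  eapply filterdiff_ext_lin.
  - apply (filterdiff_comp g (fun t : prod_NormedModule R_AbsRing R_NormedModule R_NormedModule => snd t) _ (fun t => snd t) H).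
    apply filterdiff_linear. apply is_linear_snd.
  - intros y. simpl. destruct l. simpl. reflexivity.
Qed.

Lemma is_derive_Re_comb (c1 c2 : C) (F1 F2 : R -> C) l1 l2 t :
  is_derive F1 t l1 -> is_derive F2 t l2 ->
  is_derive (fun s => Re (c1 * F1 s - c2 * F2 s)%C) t (Re (c1 * l1 - c2 * l2)%C).
Proof.
  intros H1 H2.
  apply is_derive_Re in H1 as R1. apply is_derive_Im in H1 as I1.
  apply is_derive_Re in H2 as R2. apply is_derive_Im in H2 as I2.
  eapply is_derive_ext.
  2: { apply (is_derive_minus (fun s => Re c1 * Re (F1 s) - Im c1 * Im (F1 s))
             (fun s => Re c2 * Re (F2 s) - Im c2 * Im (F2 s))).
       apply (is_derive_minus (fun s => Re c1 * Re (F1 s)) (fun s => Im c1 * Im (F1 s))).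
       apply is_derive_scal; auto. apply is_derive_scal; auto.
       apply (is_derive_minus (fun s => Re c2 * Re (F2 s)) (fun s => Im c2 * Im (F2 s))).
       apply is_derive_scal; auto. apply is_derive_scal; auto. }
  intros s. simpl. destruct c1, c2, (F1 s), (F2 s); unfold minus, plus, opp; simpl. ring.
Qed.

Lemma is_derive_Im_comb (c1 c2 : C) (F1 F2 : R -> C) l1 l2 t :
  is_derive F1 t l1 -> is_derive F2 t l2 ->
  is_derive (fun s => Im (c1 * F1 s - c2 * F2 s)%C) t (Im (c1 * l1 - c2 * l2)%C).
Proof.
  intros H1 H2.
  apply is_derive_Re in H1 as R1. apply is_derive_Im in H1 as I1.
  apply is_derive_Re in H2 as R2. apply is_derive_Im in H2 as I2.
  eapply is_derive_ext.
  2: { apply (is_derive_minus (fun s => Re c1 * Im (F1 s) + Im c1 * Re (F1 s))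
             (fun s => Re c2 * Im (F2 s) + Im c2 * Re (F2 s))).
       apply (is_derive_plus (fun s => Re c1 * Im (F1 s)) (fun s => Im c1 * Re (F1 s))).
       apply is_derive_scal; auto. apply is_derive_scal; auto.
       apply (is_derive_plus (fun s => Re c2 * Im (F2 s)) (fun s => Im c2 * Re (F2 s))).
       apply is_derive_scal; auto. apply is_derive_scal; auto. }
  intros s. simpl. destruct c1, c2, (F1 s), (F2 s); unfold minus, plus, opp; simpl. ring.
Qed.

Lemma Cderive_eq (F F' : R -> C) y :
  (forall t, -1 < t < 1 -> is_derive F t (F' t)) -> -1 < y < 1 -> Cderive F y = F' y.
Proof.
  intros H Hy. unfold Cderive.
  assert (E1 : Derive (fun t => Re (F t)) y = Re (F' y)).
  { apply is_derive_unique. apply (is_derive_Re _ _ _ (H y Hy)). }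
  assert (E2 : Derive (fun t => Im (F t)) y = Im (F' y)).
  { apply is_derive_unique. apply (is_derive_Im _ _ _ (H y Hy)). }
  rewrite E1, E2. destruct (F' y); reflexivity.
Qed.

Lemma locally_int (y : R) (P : R -> Prop) :
  -1 < y < 1 -> (forall t, -1 < t < 1 -> P t) -> locally y P.
Proof.
  intros Hy HP. apply (locally_interval _ _ (-1) 1); simpl; try lra.
  intros t H1 H2. apply HP; simpl in *; lra.
Qed.

Lemma Cderive2_eq (F F' F'' : R -> C) y :
  (forall t, -1 < t < 1 -> is_derive F t (F' t)) ->
  (forall t, -1 < t < 1 -> is_derive F' t (F'' t)) ->
  -1 < y < 1 -> Cderive (Cderive F) y = F'' y.
Proof.
  intros H H' Hy. unfold Cderive at 1.
  assert (E1 : Derive (fun t => Re (Cderive F t)) y = Re (F'' y)).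
  { apply is_derive_unique. eapply is_derive_ext_loc.
    2: apply (is_derive_Re _ _ _ (H' y Hy)).
    apply locally_int; auto. intros t Ht. rewrite (Cderive_eq F F' t H Ht). reflexivity. }
  assert (E2 : Derive (fun t => Im (Cderive F t)) y = Im (F'' y)).
  { apply is_derive_unique. eapply is_derive_ext_loc.
    2: apply (is_derive_Im _ _ _ (H' y Hy)).
    apply locally_int; auto. intros t Ht. rewrite (Cderive_eq F F' t H Ht). reflexivity. }
  rewrite E1, E2. destruct (F'' y); reflexivity.
Qed.

Lemma ball_R (x e t : R) : ball x e t <-> Rabs (t - x) < e.
Proof. unfold ball; simpl; unfold AbsRing_ball, abs, minus, plus, opp; simpl. tauto. Qed.

Lemma cpt_eps p x : continuity_pt p x -> forall eps, 0 < eps -> exists d, 0 < d /\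
  forall t, Rabs (t - x) < d -> Rabs (p t - p x) < eps.
Proof.
  intros H eps He. apply continuity_pt_locally with (eps := mkposreal eps He) in H.
  destruct H as [d Hd]. exists d. split. apply cond_pos.
  intros t Ht. apply Hd. apply ball_R. exact Ht.
Qed.

Lemma eps_cpt p x : (forall eps, 0 < eps -> exists d, 0 < d /\
  forall t, Rabs (t - x) < d -> Rabs (p t - p x) < eps) -> continuity_pt p x.
Proof.
  intros H. apply continuity_pt_locally. intros eps.
  destruct (H eps (cond_pos eps)) as [d [Hd Ht]]. exists (mkposreal d Hd).
  intros t Hb. apply Ht. apply ball_R. exact Hb.
Qed.

Lemma im_le_Cmod (c : C) : Rabs (Im c) <= Cmod c.
Proof. destruct c as [a b]; unfold Cmod; simpl. rewrite <- sqrt_Rsqr_abs.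
  apply sqrt_le_1_alt. unfold Rsqr; nra. Qed.

Lemma eps_contC (g : R -> C) y : (forall eps, 0 < eps -> exists d, 0 < d /\
  forall t, Rabs (t - y) < d -> Cmod (g t - g y)%C < eps) -> continuous g y.
Proof.
  intros H. unfold continuous. apply filterlim_locally. intros eps.
  destruct (H eps (cond_pos eps)) as [d [Hd Ht]]. exists (mkposreal d Hd).
  intros t Hb. apply ball_R in Hb. specialize (Ht t Hb).
  assert (H1 := re_le_Cmod (g t - g y)%C).
  assert (H2 := im_le_Cmod (g t - g y)%C).
  split; apply ball_R; simpl in *; destruct (g t), (g y); simpl in *; unfold Rminus; lra.
Qed.

Lemma cpt_of_derive p x : ex_derive p x -> continuity_pt p x.
Proof. intros H. apply continuity_pt_filterlim. apply (ex_derive_continuous p x H). Qed.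

Definition cont_at (astar : R) (F : R -> R -> C) (y a : R) : Prop :=
  forall eps, 0 < eps -> exists delta, 0 < delta /\
    forall y' a', -1 <= y' <= 1 -> a' <> - astar ->
      Rabs (y' - y) < delta -> Rabs (a' - a) < delta ->
      Cmod (F y' a' - F y a)%C < eps.

Definition op_cont (op : C -> C -> C) := forall u v eps, 0 < eps -> exists d, 0 < d /\
  forall u' v', Cmod (u' - u)%C < d -> Cmod (v' - v)%C < d -> Cmod (op u' v' - op u v)%C < eps.

Lemma cont_comb2 astar op F G y a : op_cont op -> cont_at astar F y a -> cont_at astar G y a ->
  cont_at astar (fun y a => op (F y a) (G y a)) y a.
Proof.
  intros Hop HF HG eps He.
  destruct (Hop (F y a) (G y a) eps He) as [d [Hd Hd']].
  destruct (HF d Hd) as [d1 [Hd1 H1]]. destruct (HG d Hd) as [d2 [Hd2 H2]].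
  exists (Rmin d1 d2). split. apply Rmin_pos; auto.
  intros y' a' Hy' Ha' Hy Ha. apply Hd'.
  apply H1; auto; eapply Rlt_le_trans; eauto; apply Rmin_l.
  apply H2; auto; eapply Rlt_le_trans; eauto; apply Rmin_r.
Qed.

Lemma op_cont_plus : op_cont Cplus.
Proof.
  intros u v eps He. exists (eps/2). split. lra. intros u' v' H1 H2.
  replace ((u' + v') - (u + v))%C with ((u' - u) + (v' - v))%C by ring.
  eapply Rle_lt_trans. apply Cmod_triangle. lra.
Qed.

Lemma op_cont_minus : op_cont Cminus.
Proof.
  intros u v eps He. exists (eps/2). split. lra. intros u' v' H1 H2.
  replace ((u' - v') - (u - v))%C with ((u' - u) + - (v' - v))%C by ring.
  eapply Rle_lt_trans. apply Cmod_triangle. rewrite Cmod_opp. lra.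
Qed.

Lemma op_cont_mult : op_cont Cmult.
Proof.
  intros u v eps He.
  set (M := 1 + Cmod u + Cmod v).
  assert (HM : 0 < M). { unfold M. assert (H0 := Cmod_ge_0 u). assert (H1 := Cmod_ge_0 v). lra. }
  exists (Rmin 1 (eps / M)). split. apply Rmin_pos. lra. apply Rdiv_lt_0_compat; auto.
  intros u' v' H1 H2.
  replace ((u' * v') - (u * v))%C with ((u' - u) * (v' - v) + u * (v' - v) + (u' - u) * v)%C by ring.
  assert (Hm1 := Rmin_l 1 (eps / M)). assert (Hm2 := Rmin_r 1 (eps / M)).
  set (d := Rmin 1 (eps / M)) in *.
  assert (HdM : d * M <= eps).
  { apply Rle_trans with (eps / M * M). apply Rmult_le_compat_r; lra. field_simplify; lra. }
  eapply Rle_lt_trans. apply Cmod_triangle.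
  eapply Rle_lt_trans. apply Rplus_le_compat_r. apply Cmod_triangle.
  rewrite !Cmod_mult.
  assert (A1 := Cmod_ge_0 (u' - u)). assert (A2 := Cmod_ge_0 (v' - v)).
  assert (A3 := Cmod_ge_0 u). assert (A4 := Cmod_ge_0 v).
  unfold M in HdM.
  set (p := Cmod (u' - u)) in *. set (q := Cmod (v' - v)) in *.
  assert (p * q <= p). { rewrite <- (Rmult_1_r p) at 2. apply Rmult_le_compat_l; lra. }
  assert (Cmod u * q <= Cmod u * d). { apply Rmult_le_compat_l; lra. }
  assert (p * Cmod v <= d * Cmod v). { apply Rmult_le_compat_r; lra. }
  nra.
Qed.

Lemma cont_plus astar F G y a : cont_at astar F y a -> cont_at astar G y a ->
  cont_at astar (fun y a => F y a + G y a)%C y a.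
Proof. apply cont_comb2, op_cont_plus. Qed.
Lemma cont_minus astar F G y a : cont_at astar F y a -> cont_at astar G y a ->
  cont_at astar (fun y a => F y a - G y a)%C y a.
Proof. apply cont_comb2, op_cont_minus. Qed.
Lemma cont_mult astar F G y a : cont_at astar F y a -> cont_at astar G y a ->
  cont_at astar (fun y a => F y a * G y a)%C y a.
Proof. apply cont_comb2, op_cont_mult. Qed.

Lemma cont_const astar (c : C) y a : cont_at astar (fun _ _ => c) y a.
Proof.
  intros eps He. exists 1. split. lra. intros. replace (c - c)%C with (RtoC 0) by ring.
  rewrite Cmod_0; auto.
Qed.

Lemma cont_opp astar F y a : cont_at astar F y a -> cont_at astar (fun y a => - F y a)%C y a.
Proof.
  intros H. assert (E : forall y a, (- F y a)%C = (RtoC 0 - F y a)%C) by (intros; ring).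
  intros eps He. destruct (cont_minus astar (fun _ _ => RtoC 0) F y a (cont_const _ _ _ _) H eps He)
    as [d [Hd H']]. exists d. split; auto. intros. rewrite !E. apply H'; auto.
Qed.

Lemma cont_Ry astar (p : R -> R) y a : continuity_pt p y -> cont_at astar (fun y _ => RtoC (p y)) y a.
Proof.
  intros H eps He. destruct (cpt_eps p y H eps He) as [d [Hd H']].
  exists d. split; auto. intros. rewrite <- RtoC_minus, Cmod_R. apply H'; auto.
Qed.

Lemma cont_Ra astar (p : R -> R) y a : continuity_pt p a -> cont_at astar (fun _ a => RtoC (p a)) y a.
Proof.
  intros H eps He. destruct (cpt_eps p a H eps He) as [d [Hd H']].
  exists d. split; auto. intros. rewrite <- RtoC_minus, Cmod_R. apply H'; auto.
Qed.

Lemma cont_Cmod astar F y a : cont_at astar F y a -> cont_at astar (fun y a => RtoC (Cmod (F y a))) y a.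
Proof.
  intros H eps He. destruct (H eps He) as [d [Hd H']].
  exists d. split; auto. intros y' a' Hy Ha Hy' Ha'. rewrite <- RtoC_minus, Cmod_R.
  specialize (H' y' a' Hy Ha Hy' Ha').
  assert (T1 := Cmod_triangle (F y' a' - F y a)%C (F y a)).
  assert (T2 := Cmod_triangle (F y a - F y' a')%C (F y' a')).
  replace (F y' a' - F y a + F y a)%C with (F y' a') in T1 by ring.
  replace (F y a - F y' a' + F y' a')%C with (F y a) in T2 by ring.
  replace (F y a - F y' a')%C with (- (F y' a' - F y a))%C in T2 by ring.
  rewrite Cmod_opp in T2.
  unfold Rabs; destruct Rcase_abs; lra.
Qed.

Lemma cont_ext astar F G y a : (forall y a, F y a = G y a) -> cont_at astar G y a -> cont_at astar F y a.
Proof. intros E H eps He. destruct (H eps He) as [d [Hd H']]. exists d. split; auto.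
  intros. rewrite !E. auto. Qed.

Lemma cont_ext_dom astar F G y a : 
  (exists r, 0 < r /\ forall y' a', -1 <= y' <= 1 -> a' <> - astar ->
      Rabs (y' - y) < r -> Rabs (a' - a) < r -> F y' a' = G y' a') ->
  F y a = G y a -> cont_at astar G y a -> cont_at astar F y a.
Proof.
  intros [r [Hr E]] E0 H eps He. destruct (H eps He) as [d [Hd H']]. exists (Rmin d r).
  split. apply Rmin_pos; auto.
  intros y' a' Hy Ha Hy' Ha'. assert (Hm1 := Rmin_l d r). assert (Hm2 := Rmin_r d r).
  rewrite E0, E; auto; try lra. apply H'; auto; lra.
Qed.

Definition clamp (s : R) := Rmax (-1) (Rmin s 1).
Lemma clamp_in s : -1 <= clamp s <= 1.
Proof. unfold clamp, Rmax, Rmin; repeat destruct Rle_dec; lra. Qed.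
Lemma clamp_id s : -1 <= s <= 1 -> clamp s = s.
Proof. unfold clamp, Rmax, Rmin; repeat destruct Rle_dec; lra. Qed.
Lemma clamp_lip s t : Rabs (clamp s - clamp t) <= Rabs (s - t).
Proof. unfold clamp, Rmax, Rmin; repeat destruct Rle_dec; unfold Rabs; repeat destruct Rcase_abs; lra. Qed.

Lemma mvt_part (phi dphi : R -> R) y' : -1 <= y' < 1 ->
  (forall t, -1 < t < 1 -> is_derive phi t (dphi t)) ->
  (forall t, -1 <= t <= 1 -> forall eps, 0 < eps -> exists d, 0 < d /\
     forall s, -1 <= s <= 1 -> Rabs (s - t) < d -> Rabs (phi s - phi t) < eps) ->
  exists c, y' <= c <= 1 /\ phi 1 - phi y' = dphi c * (1 - y').
Proof.
  intros Hy Hd Hc.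
  destruct (MVT_gen (fun s => phi (clamp s)) y' 1 dphi) as [c [Hc1 Hc2]].
  - intros x Hx. rewrite Rmin_left in Hx by lra. rewrite Rmax_right in Hx by lra.
    eapply is_derive_ext_loc. 2: apply (Hd x); lra.
    apply locally_int. lra. intros t Ht. rewrite clamp_id; auto; lra.
  - intros x Hx. rewrite Rmin_left in Hx by lra. rewrite Rmax_right in Hx by lra.
    apply eps_cpt. intros eps He. destruct (Hc x ltac:(lra) eps He) as [d [Hd0 Hd1]].
    exists d. split; auto. intros t Ht. rewrite (clamp_id x) by lra.
    apply Hd1. apply clamp_in. rewrite <- (clamp_id x) at 1 by lra.
    eapply Rle_lt_trans. apply clamp_lip. auto.
  - rewrite Rmin_left in Hc1 by lra. rewrite Rmax_right in Hc1 by lra.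
    exists c. split; auto. rewrite !clamp_id in Hc2 by lra. exact Hc2.
Qed.

Lemma Cmod_le_ReIm (z : C) : Cmod z <= Rabs (Re z) + Rabs (Im z).
Proof.
  destruct z as [a b]; unfold Cmod; simpl.
  rewrite <- (sqrt_Rsqr (Rabs a + Rabs b)).
  2: { assert (H1 := Rabs_pos a). assert (H2 := Rabs_pos b). lra. }
  apply sqrt_le_1_alt. unfold Rsqr.
  assert (H1 := Rabs_pos a). assert (H2 := Rabs_pos b).
  assert (a * a = Rabs a * Rabs a). { rewrite <- Rabs_mult. rewrite Rabs_right; [ring|]. nra. }
  assert (b * b = Rabs b * Rabs b). { rewrite <- Rabs_mult. rewrite Rabs_right; [ring|]. nra. }
  nra.
Qed.

Lemma Re_mult_R (z : C) (r : R) : Re (z * RtoC r)%C = Re z * r.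
Proof. destruct z; simpl; ring. Qed.
Lemma Im_mult_R (z : C) (r : R) : Im (z * RtoC r)%C = Im z * r.
Proof. destruct z; simpl; ring. Qed.
Lemma Re_minus (u v : C) : Re (u - v)%C = Re u - Re v.
Proof. destruct u, v; simpl; ring. Qed.
Lemma Im_minus (u v : C) : Im (u - v)%C = Im u - Im v.
Proof. destruct u, v; simpl; ring. Qed.

Section Main.
Variable astar : R.
Variables f fy fyy : R -> R -> C.
Hypothesis Hder : forall y a, -1 < y < 1 -> a <> - astar ->
  is_derive (fun t => f t a) y (fy y a) /\ is_derive (fun t => fy t a) y (fyy y a).
Hypothesis Hcf : forall y a, -1 <= y <= 1 -> a <> - astar -> cont_at astar f y a.
Hypothesis Hcfy : forall y a, -1 <= y <= 1 -> a <> - astar -> cont_at astar fy y a.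
Hypothesis Hcfyy : forall y a, -1 <= y <= 1 -> a <> - astar -> cont_at astar fyy y a.

Definition al (a : R) : C := RtoC (astar + a).
Definition c1 (a : R) : C := (RtoC 4 * Ci * al a)%C.
Definition c2 (a : R) : C := (RtoC 2 - RtoC 2 * Ci * al a)%C.
Definition gfun (y a : R) : C := (c1 a * fy y a - c2 a * f y a)%C.
Definition gyfun (y a : R) : C := (c1 a * fyy y a - c2 a * fy y a)%C.
Definition Kfun (y a : R) : C :=
  if Rlt_dec y 1 then (gfun y a * RtoC (/ (1 - y)))%C else (- gyfun y a)%C.

Lemma cont_al y a : a <> - astar -> cont_at astar (fun _ a => al a) y a.
Proof. intros Ha. unfold al. apply (cont_Ra astar (fun a => astar + a)).
  apply cpt_of_derive. auto_derive. auto. Qed.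

Lemma cont_inval y a : a <> - astar -> cont_at astar (fun _ a => / al a)%C y a.
Proof.
  intros Ha. apply cont_ext_dom with (G := fun _ a => RtoC (/ (astar + a))).
  - exists 1. split. lra. intros. unfold al. rewrite RtoC_inv; auto. lra.
  - unfold al. rewrite RtoC_inv; auto. lra.
  - apply (cont_Ra astar (fun a => / (astar + a))). apply cpt_of_derive. auto_derive. lra.
Qed.

Ltac cont_tac :=
  repeat first
   [ apply cont_plus | apply cont_minus | apply cont_mult | apply cont_opp
   | apply cont_al; assumption | apply cont_inval; assumption
   | apply Hcf; assumption | apply Hcfy; assumption | apply Hcfyy; assumption
   | apply cont_const ].

Lemma cont_g y a : -1 <= y <= 1 -> a <> - astar -> cont_at astar gfun y a.
Proof. intros Hy Ha. unfold gfun, c1, c2. cont_tac. Qed.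
Lemma cont_gy y a : -1 <= y <= 1 -> a <> - astar -> cont_at astar gyfun y a.
Proof. intros Hy Ha. unfold gyfun, c1, c2. cont_tac. Qed.


Hypothesis Hbc : forall a, a <> - astar -> gfun 1 a = RtoC 0.

Lemma mvt_g (a' y' : R) : a' <> - astar -> -1 <= y' < 1 ->
  (exists c, y' <= c <= 1 /\ Re (gfun y' a') = - Re (gyfun c a') * (1 - y')) /\
  (exists c, y' <= c <= 1 /\ Im (gfun y' a') = - Im (gyfun c a') * (1 - y')).
Proof.
  intros Ha Hy. split.
  - destruct (mvt_part (fun t => Re (gfun t a')) (fun t => Re (gyfun t a')) y' Hy) as [c [Hc1 Hc2]].
    + intros t Ht. unfold gfun, gyfun. apply is_derive_Re_comb; apply Hder; auto.
    + intros t Ht eps He. destruct (cont_g t a' Ht Ha eps He) as [d [Hd H]].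
      exists d. split; auto. intros s Hs Hst. rewrite <- Re_minus.
      eapply Rle_lt_trans. apply re_le_Cmod. apply H; auto. rewrite Rminus_eq_0, Rabs_R0; auto.
    + exists c. split; auto. rewrite Hbc in Hc2 by auto. rewrite re_RtoC in Hc2. lra.
  - destruct (mvt_part (fun t => Im (gfun t a')) (fun t => Im (gyfun t a')) y' Hy) as [c [Hc1 Hc2]].
    + intros t Ht. unfold gfun, gyfun. apply is_derive_Im_comb; apply Hder; auto.
    + intros t Ht eps He. destruct (cont_g t a' Ht Ha eps He) as [d [Hd H]].
      exists d. split; auto. intros s Hs Hst. rewrite <- Im_minus.
      eapply Rle_lt_trans. apply im_le_Cmod. apply H; auto. rewrite Rminus_eq_0, Rabs_R0; auto.
    + exists c. split; auto. rewrite Hbc in Hc2 by auto. rewrite im_RtoC in Hc2. lra.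
Qed.

Lemma cont_K y a : -1 <= y <= 1 -> a <> - astar -> cont_at astar Kfun y a.
Proof.
  intros Hy Ha. destruct (Rlt_dec y 1) as [Hy1|Hy1].
  - apply cont_ext_dom with (G := fun y a => (gfun y a * RtoC (/ (1 - y)))%C).
    + exists (1 - y). split. lra. intros y' a' _ _ H1 _. unfold Kfun.
      destruct (Rlt_dec y' 1); auto. exfalso. unfold Rabs in H1; destruct Rcase_abs in H1; lra.
    + unfold Kfun. destruct (Rlt_dec y 1); [auto|lra].
    + apply cont_mult. apply cont_g; auto.
      apply (cont_Ry astar (fun y => / (1 - y))). apply cpt_of_derive. auto_derive. lra.
  - assert (y = 1) by lra. subst y.
    intros eps He. destruct (cont_gy 1 a ltac:(lra) Ha (eps/2) ltac:(lra)) as [d [Hd H]].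
    exists d. split; auto. intros y' a' Hy' Ha' Hyd Had.
    assert (EK1 : Kfun 1 a = (- gyfun 1 a)%C).
    { unfold Kfun. destruct (Rlt_dec 1 1); [lra|auto]. }
    rewrite EK1.
    destruct (Rlt_dec y' 1) as [Hy'1|Hy'1].
    + assert (EK : Kfun y' a' = (gfun y' a' * RtoC (/ (1 - y')))%C).
      { unfold Kfun. destruct (Rlt_dec y' 1); [auto|lra]. }
      rewrite EK.
      destruct (mvt_g a' y' Ha' ltac:(lra)) as [[c [Hc Ec]] [c' [Hc' Ec']]].
      eapply Rle_lt_trans. apply Cmod_le_ReIm.
      assert (Hc1 : Rabs (c - 1) < d). { rewrite Rabs_left1 by lra. rewrite Rabs_left1 in Hyd by lra. lra. }
      assert (Hc1' : Rabs (c' - 1) < d). { rewrite Rabs_left1 by lra. rewrite Rabs_left1 in Hyd by lra. lra. }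
      assert (B1 := H c a' ltac:(lra) Ha' Hc1 Had).
      assert (B2 := H c' a' ltac:(lra) Ha' Hc1' Had).
      assert (R1 := re_le_Cmod (gyfun c a' - gyfun 1 a)%C).
      assert (R2 := im_le_Cmod (gyfun c' a' - gyfun 1 a)%C).
      rewrite Re_minus, Im_minus, Re_mult_R, Im_mult_R in *.
      rewrite Ec, Ec'.
      replace (- Re (gyfun c a') * (1 - y') * / (1 - y')) with (- Re (gyfun c a')) by (field; lra).
      replace (- Im (gyfun c' a') * (1 - y') * / (1 - y')) with (- Im (gyfun c' a')) by (field; lra).
      replace (Re (- gyfun 1 a)%C) with (- Re (gyfun 1 a)) by (destruct (gyfun 1 a); reflexivity).
      replace (Im (- gyfun 1 a)%C) with (- Im (gyfun 1 a)) by (destruct (gyfun 1 a); reflexivity).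
      replace (- Re (gyfun c a') - - Re (gyfun 1 a)) with (- (Re (gyfun c a') - Re (gyfun 1 a))) by ring.
      replace (- Im (gyfun c' a') - - Im (gyfun 1 a)) with (- (Im (gyfun c' a') - Im (gyfun 1 a))) by ring.
      rewrite !Rabs_Ropp. lra.
    + assert (y' = 1) by lra. subst y'.
      assert (EK : Kfun 1 a' = (- gyfun 1 a')%C).
      { unfold Kfun. destruct (Rlt_dec 1 1); [lra|auto]. }
      rewrite EK. replace (- gyfun 1 a' - - gyfun 1 a)%C with (- (gyfun 1 a' - gyfun 1 a))%C by ring.
      rewrite Cmod_opp. assert (B := H 1 a' Hy' Ha' Hyd Had). lra.
Qed.


Definition Hfun (y a : R) : C :=
 (RtoC ((1 + y) * (1 - y) ^ 2) * fyy y a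
 + RtoC (1 + y) * Kfun y a
 + ( - (RtoC (1 + y) * (RtoC 2 * Ci * al a)) - RtoC ((1 + y) * (1 - y)) * (RtoC 2 + RtoC 2 * Ci * / al a)
     + RtoC ((1 - y) ^ 2) * RtoC 2 ) * fy y a
 + ( - (RtoC (1 + y) * (RtoC 1 * (/ al a * / al a) - Ci * / al a))
     - RtoC ((1 + y) * (1 - y)) * (RtoC 1 + Ci * / al a)
     - RtoC ((1 - y) ^ 2) * (RtoC 1 + Ci * / al a)) * f y a
 + RtoC (1 + y) * (f y a * (RtoC (Cmod (f y a)) * RtoC (Cmod (f y a)))))%C.

Lemma cont_H y a : -1 <= y <= 1 -> a <> - astar -> cont_at astar Hfun y a.
Proof.
  intros Hy Ha. unfold Hfun.
  repeat first
   [ apply cont_plus | apply cont_minus | apply cont_mult | apply cont_opp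
   | apply cont_al; assumption | apply cont_inval; assumption
   | apply Hcf; assumption | apply Hcfy; assumption | apply Hcfyy; assumption
   | apply cont_K; assumption | apply cont_Cmod
   | apply cont_const
   | (apply (cont_Ry astar (fun y => _)); apply cpt_of_derive; auto_derive; auto) ].
Qed.

Lemma RtoC_neq0 x : x <> 0 -> RtoC x <> RtoC 0.
Proof. intros H E. apply H. apply RtoC_inj. exact E. Qed.

Lemma H_eq y a : -1 < y < 1 -> a <> - astar ->
  (RtoC (wY y) * Rop (astar + a) (fun y => f y a) y)%C = Hfun y a.
Proof.
  intros Hy Ha. unfold Rop.
  rewrite (Cderive2_eq (fun t => f t a) (fun t => fy t a) (fun t => fyy t a)); auto.
  2: intros; apply Hder; auto.
  2: intros; apply Hder; auto.
  rewrite (Cderive_eq (fun t => f t a) (fun t => fy t a)); auto.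
  2: intros; apply Hder; auto.
  unfold Hfun, Kfun. destruct (Rlt_dec y 1) as [_|]; [|lra].
  unfold gfun, c1, c2, al, p0, q0, wY.
  rewrite RtoC_inv by lra.
  rewrite !RtoC_mult, !RtoC_pow.
  assert (N1 := RtoC_neq0 (1 - y) ltac:(lra)).
  assert (N2 := RtoC_neq0 (1 + y) ltac:(lra)).
  assert (N3 := RtoC_neq0 (astar + a) ltac:(lra)).
  field. auto.
Qed.


Lemma wY_pos y : -1 < y < 1 -> 0 < wY y.
Proof. intros Hy. unfold wY. apply Rmult_lt_0_compat. lra. apply pow_lt. lra. Qed.

Lemma Rop_eq2 y a : -1 < y < 1 -> a <> - astar ->
  Rop (astar + a) (fun y => f y a) y = (Hfun y a * RtoC (/ wY y))%C.
Proof.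
  intros Hy Ha. rewrite <- H_eq by auto. assert (W := wY_pos y Hy).
  rewrite RtoC_inv by lra. assert (N := RtoC_neq0 (wY y) ltac:(lra)).
  field. auto.
Qed.

Lemma part1 a : a <> - astar -> inY (Rop (astar + a) (fun y => f y a)).
Proof.
  intros Ha. split.
  - intros y Hy. apply eps_contC. intros eps He.
    assert (HG : cont_at astar (fun y a => Hfun y a * RtoC (/ wY y))%C y a).
    { apply cont_mult. apply cont_H; auto; lra.
      apply (cont_Ry astar (fun y => / wY y)). apply cpt_of_derive. unfold wY. auto_derive.
      assert (W := wY_pos y Hy). unfold wY in W. simpl in W. lra. }
    destruct (HG eps He) as [d [Hd H]].
    exists (Rmin d (Rmin (1 + y) (1 - y))). split.
    { apply Rmin_pos; auto. apply Rmin_pos; lra. }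
    intros t Ht. assert (M1 := Rmin_l d (Rmin (1 + y) (1 - y))).
    assert (M2 := Rmin_r d (Rmin (1 + y) (1 - y))).
    assert (M3 := Rmin_l (1 + y) (1 - y)). assert (M4 := Rmin_r (1 + y) (1 - y)).
    assert (Ht' : -1 < t < 1). { apply Rabs_def2 in Ht. lra. }
    rewrite !Rop_eq2 by auto. apply H; auto; try lra.
    rewrite Rminus_eq_0, Rabs_R0; auto.
  - exists (fun y => Hfun y a). split.
    + intros y Hy eps He. destruct (cont_H y a Hy Ha eps He) as [d [Hd H]].
      exists d. split; auto. intros z Hz Hzy. apply H; auto. rewrite Rminus_eq_0, Rabs_R0; auto.
    + intros y Hy. symmetry. apply H_eq; auto.
Qed.

Lemma tube (F : R -> R -> C) a0 : a0 <> - astar ->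
  (forall t, -1 <= t <= 1 -> cont_at astar F t a0) ->
  forall eps, 0 < eps -> exists delta, 0 < delta /\ forall y a, -1 <= y <= 1 -> a <> - astar ->
    Rabs (a - a0) < delta -> Cmod (F y a - F y a0)%C < eps.
Proof.
  intros Ha0 HF eps He.
  assert (Hex : forall t, exists d : posreal, (-1 <= t <= 1 -> forall y' a', -1 <= y' <= 1 -> a' <> - astar ->
      Rabs (y' - t) < d -> Rabs (a' - a0) < d -> Cmod (F y' a' - F t a0)%C < eps / 2)).
  { intros t. destruct (classic (-1 <= t <= 1)) as [Ht|Ht].
    - destruct (HF t Ht (eps/2) ltac:(lra)) as [d [Hd H]]. exists (mkposreal d Hd). intros _. exact H.
    - exists (mkposreal 1 Rlt_0_1). intros Ht'. contradiction. }
  pose (delta := fun t => proj1_sig (constructive_indefinite_description _ (Hex t))).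
  destruct (compactness_value_1d (-1) 1 delta) as [d Hdd].
  exists d. split. apply cond_pos. intros y a Hy Ha Had.
  specialize (Hdd y Hy).
  destruct (classic (Cmod (F y a - F y a0)%C < eps)) as [ok|nok]; auto. exfalso.
  apply Hdd. intros [t [Ht [Hyt Hdt]]]. apply nok.
  assert (P := proj2_sig (constructive_indefinite_description _ (Hex t))).
  change (proj1_sig (constructive_indefinite_description _ (Hex t))) with (delta t) in P.
  assert (B1 := P Ht y a Hy Ha Hyt (Rlt_le_trans _ _ _ Had Hdt)).
  assert (B2 := P Ht y a0 Hy Ha0 Hyt ltac:(rewrite Rminus_eq_0, Rabs_R0; apply cond_pos)).
  replace (F y a - F y a0)%C with ((F y a - F t a0) + - (F y a0 - F t a0))%C by ring.
  eapply Rle_lt_trans. apply Cmod_triangle. rewrite Cmod_opp. lra.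
Qed.

Lemma part2 a0 : a0 <> - astar -> forall eps, 0 < eps -> exists delta, 0 < delta /\
     forall a, a <> - astar -> Rabs (a - a0) < delta ->
       Ydist_le (Rop (astar + a) (fun y => f y a)) (Rop (astar + a0) (fun y => f y a0)) eps.
Proof.
  intros Ha0 eps He.
  destruct (tube Hfun a0 Ha0 (fun t Ht => cont_H t a0 Ht Ha0) eps He) as [d [Hd H]].
  exists d. split; auto. intros a Ha Had y Hy.
  assert (W := wY_pos y Hy).
  rewrite <- (Rabs_pos_eq (wY y)) by lra. rewrite <- Cmod_R, <- Cmod_mult.
  replace (RtoC (wY y) * (Rop (astar + a) (fun y => f y a) y - Rop (astar + a0) (fun y => f y a0) y))%C
    with (RtoC (wY y) * Rop (astar + a) (fun y => f y a) y - RtoC (wY y) * Rop (astar + a0) (fun y => f y a0) y)%C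
    by ring.
  rewrite !H_eq by auto. left. apply H; auto. lra.
Qed.

End Main.

Lemma bc_g astar (f fy : R -> R -> C) a : a <> - astar ->
  fy 1 a = ((RtoC 1 - Ci * RtoC (astar + a)) / (RtoC 2 * Ci * RtoC (astar + a)) * f 1 a)%C ->
  gfun astar f fy 1 a = RtoC 0.
Proof.
  intros Ha E. unfold gfun, c1, c2, al. rewrite E.
  replace (RtoC 4) with (RtoC 2 * RtoC 2)%C by (rewrite <- RtoC_mult; f_equal; lra).
  assert (N3 := RtoC_neq0 (astar + a) ltac:(lra)).
  assert (N2 := RtoC_neq0 2 ltac:(lra)).
  assert (Ni := Ci_nz).
  field. auto.
Qed.

Theorem lemma3p5 (astar : R) (f fy fa fyy fya fay faa : R -> R -> C) :
  astar <> 0 ->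
  C2_dom astar f fy fa fyy fya fay faa ->
  (forall a, a <> - astar ->
     fy 1 a = ((RtoC 1 - Ci * RtoC (astar + a)) / (RtoC 2 * Ci * RtoC (astar + a))
               * f 1 a)%C) ->
  (forall a, a <> - astar -> inY (Rop (astar + a) (fun y => f y a))) /\
  (forall a0, a0 <> - astar -> forall eps, 0 < eps -> exists delta, 0 < delta /\
     forall a, a <> - astar -> Rabs (a - a0) < delta ->
       Ydist_le (Rop (astar + a) (fun y => f y a)) (Rop (astar + a0) (fun y => f y a0)) eps).
Proof.
  intros Hast [Hd [Hcf [Hcfy [_ [Hcfyy _]]]]] Hbc.
  assert (Hder : forall y a, -1 < y < 1 -> a <> - astar ->
    is_derive (fun t => f t a) y (fy y a) /\ is_derive (fun t => fy t a) y (fyy y a)).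
  { intros y a Hy Ha. destruct (Hd y a Hy Ha) as [D1 [_ [D3 _]]]. split; auto. }
  assert (Hbc' : forall a, a <> - astar -> gfun astar f fy 1 a = RtoC 0).
  { intros a Ha. apply bc_g; auto. }
  split.
  - intros a Ha. eapply part1; eauto.
  - intros a0 Ha0. eapply part2; eauto.
Qed.
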